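(* Let $(X,\mathcal{F})$ be a Subset Avoider-Enforcer game and let $a,b\in X$ be distinct vertices with $L(a)\prec L(b)$. If a player (Avoider or Enforcer) has a winning strategy in this game, then she also has a winning strategy in which she always prefers claiming $a$ over claiming $b$, i.e. a winning strategy which, whenever it is her turn and both $a$ and $b$ are unclaimed, never claims $b$.
   Context: A Subset Avoider-Enforcer game $(X,\mathcal{F})$ consists of a finite board $X$ and a family $\mathcal{F}$ of pairs $(f,i_f)$ with $f\subseteq X$ and $i_f\in\mathbb{N}$. Avoider and Enforcer alternately claim one previously unclaimed element of $X$ per move (either player may be designated to start) until all of $X$ is claimed. Avoider loses (Enforcer wins) if for some $(f,i_f)\in\mathcal{F}$ she has claimed at least $i_f$ elements of $f$; otherwise Avoider wins. (An ordinary Avoider-Enforcer game with losing sets $\mathcal{F}'$ corresponds to taking pairs $(f,|f|)$ for $f\in\mathcal{F}'$.) For $v\in X$ let $L(v)=\{(f,i_f)\in\mathcal{F} : v\in f\}$. We write $L(a)\prec L(b)$ if for every $(f,i_f)\in L(a)$ there is $(g,i_g)\in L(b)$ with $g\subseteq f$ and $i_g\le i_f$. *)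

(* Defs.v *)
From mathcomp Require Import all_boot.
Set Implicit Arguments. Unset Strict Implicit. Unset Printing Implicit Defensive.

Inductive player := Avoider | Enforcer.

Definition player_eqb (p q : player) : bool :=
  match p, q with
  | Avoider, Avoider | Enforcer, Enforcer => true
  | _, _ => false
  end.

Definition other (p : player) : player :=
  match p with Avoider => Enforcer | Enforcer => Avoider end.

(* The player who makes move number k (k = 0 is the first move), when
   [st] is the player who starts. *)
Definition player_at (st : player) (k : nat) : player :=
  if odd k then other st else st.

Section Game.
Variable X : finType.

(* A Subset Avoider-Enforcer game on board X is given by the sae_family F of
   pairs (f, i_f). *)
Definition sae_family := seq ({set X} * nat).

(* Elements claimed by player p in the (partial) play [play], whose first
   element is move number k. *)
Fixpoint claims (p st : player) (k : nat) (play : seq X) : seq X :=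
  match play with
  | [::] => [::]
  | x :: t => if player_eqb (player_at st k) p then x :: claims p st k.+1 t
              else claims p st k.+1 t
  end.

Definition avoider_loses (F : sae_family) (A : {set X}) : bool :=
  has (fun fi : {set X} * nat => fi.2 <= #|fi.1 :&: A|) F.

Definition wins (F : sae_family) (st p : player) (play : seq X) : bool :=
  let A := [set x in claims Avoider st 0 play] in
  match p with
  | Avoider => ~~ avoider_loses F A
  | Enforcer => avoider_loses F A
  end.

(* A history is the sequence of elements claimed so far, in order.
   A strategy maps histories to the next element to claim. *)
Definition strategy := seq X -> X.

Definition turn_of (st p : player) (h : seq X) : Prop :=
  [/\ uniq h, size h < #|X| & player_at st (size h) = p].

Definition legal (st p : player) (s : strategy) : Prop :=
  forall h, turn_of st p h -> s h \notin h.

Definition complete_play (play : seq X) : bool :=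
  uniq play && (size play == #|X|).

Definition consistent (st p : player) (s : strategy) (play : seq X) : Prop :=
  forall h x t, play = rcons h x ++ t -> player_at st (size h) = p -> x = s h.

Definition winning_strategy (F : sae_family) (st p : player) (s : strategy) : Prop :=
  legal st p s /\
  forall play, complete_play play -> consistent st p s play -> wins F st p play.

Definition Lprec (F : sae_family) (a b : X) : Prop :=
  forall fi, fi \in F -> a \in fi.1 ->
    exists2 gj, gj \in F & [/\ b \in gj.1, gj.1 \subset fi.1 & gj.2 <= fi.2].

Definition prefers (st p : player) (s : strategy) (a b : X) : Prop :=
  forall h, turn_of st p h -> a \notin h -> b \notin h -> s h != b.

End Game.

(* Main.v *)
Require Import Defs.
From mathcomp Require Import all_boot.
Set Implicit Arguments. Unset Strict Implicit. Unset Printing Implicit Defensive.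

Lemma player_eqbP p q : reflect (p = q) (player_eqb p q).
Proof. by case: p; case: q; constructor. Qed.

Section Aux.
Variable X : finType.

Lemma consistentP (st p : player) (s : strategy X) (play : seq X) (x0 : X) :
  consistent st p s play <->
  (forall i, i < size play -> player_at st i = p -> nth x0 play i = s (take i play)).
Proof.
split.
- move=> H i Hi Hp.
  have E : play = rcons (take i play) (nth x0 play i) ++ drop i.+1 play.
    by rewrite cat_rcons -drop_nth // cat_take_drop.
  have Sz : size (take i play) = i by rewrite size_take Hi.
  by apply: (H _ _ _ E); rewrite Sz.
- move=> H h x t E Hp.
  have Hi : size h < size play by rewrite E size_cat size_rcons leq_addr.
  have := H _ Hi Hp.
  by rewrite E cat_rcons nth_cat ltnn subnn /= take_size_cat.
Qed.

Lemma claims_map (f : X -> X) q st k (s : seq X) :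
  claims q st k (map f s) = map f (claims q st k s).
Proof. elim: s k => //= x s IH k; by case: ifP; rewrite IH. Qed.

Lemma claims_mem q st k (s : seq X) i (x0 : X) : i < size s -> player_at st (k+i) = q ->
  nth x0 s i \in claims q st k s.
Proof.
elim: s k i => //= x s IH k [|i] Hi Hp.
- rewrite addn0 in Hp; rewrite Hp.
  by rewrite (introT (player_eqbP q q) erefl) mem_head.
- have Hm := IH k.+1 i Hi ltac:(by rewrite addSnnS).
  case: ifP => _ //; by rewrite in_cons Hm orbT.
Qed.

Lemma claims_memE q st k (s : seq X) (x x0 : X) : x \in claims q st k s ->
  exists2 i, i < size s & (nth x0 s i = x /\ player_at st (k+i) = q).
Proof.
elim: s k => //= y s IH k. case: ifP => Hq.
- rewrite in_cons => /orP [/eqP ->|/IH [i Hi [Hn Hp]]].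
  + exists 0 => //; rewrite addn0; split => //; exact/player_eqbP.
  + exists i.+1 => //; split => //; by rewrite -addSnnS.
- move/IH => [i Hi [Hn Hp]]; exists i.+1 => //; split=>//; by rewrite -addSnnS.
Qed.

Lemma complete_mem (s : seq X) x : complete_play s -> x \in s.
Proof.
case/andP => U /eqP S. apply/negPn/negP => Hx.
have : #|s| <= #|predC1 x|.
  apply: subset_leq_card; apply/subsetP => y Hy; rewrite !inE.
  by apply/eqP => E; rewrite -E Hy in Hx.
rewrite (card_uniqP U) S cardC1.
have : 0 < #|X| by apply/card_gt0P; exists x.
by case: #|X| => // n; rewrite ltnn.
Qed.

Variables a b : X.
Definition sw x := if x == a then b else if x == b then a else x.

Lemma swK : involutive sw.
Proof.
move=> x; rewrite /sw.
case: (eqVneq x a) => [->|Ha]; first by rewrite eqxx; case: (eqVneq b a) => [->|] //; rewrite eqxx.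
case: (eqVneq x b) => [->|Hb]; first by rewrite eqxx.
by rewrite (negbTE Ha) (negbTE Hb).
Qed.

Lemma sw_inj : injective sw. Proof. exact: can_inj swK. Qed.

Lemma sw_id x : x != a -> x != b -> sw x = x.
Proof. by move=> Ha Hb; rewrite /sw (negbTE Ha) (negbTE Hb). Qed.

Lemma mem_map_sw x (s : seq X) : (x \in map sw s) = (sw x \in s).
Proof. by rewrite -{1}(swK x) (mem_map sw_inj). Qed.

Lemma card_sw (f B : {set X}) : (a \in B) || (b \notin B) -> (a \in f -> b \in f) ->
  #|f :&: B| <= #|f :&: [set x | sw x \in B]|.
Proof.
move=> HB Hf. case: (boolP (a \in f)) => Ha.
- have Hb := Hf Ha.
  have -> : f :&: [set x | sw x \in B] = sw @^-1: (f :&: B).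
    apply/setP => x; rewrite !inE; congr (_ && _).
    rewrite /sw; case: (eqVneq x a) => [->|Hxa]; first by rewrite Ha Hb.
    case: (eqVneq x b) => [->|Hxb] //; by rewrite Ha Hb.
  by rewrite card_preimset //; exact: sw_inj.
- apply: subset_leq_card; apply/subsetP => x; rewrite !inE => /andP [Hx HxB].
  rewrite Hx /=.
  case: (eqVneq x a) => [Exa|Hxa]; first by rewrite -Exa Hx in Ha.
  case: (eqVneq x b) => [Exb|Hxb]; last by rewrite sw_id.
  have Hba : b != a by rewrite -Exb.
  rewrite Exb /sw (negbTE Hba) eqxx.
  by move: HB; rewrite -Exb HxB orbF.
Qed.

End Aux.

Section Main.
Variables (X : finType) (st p : player) (a b : X) (s : strategy X).

Definition D (h0 : seq X) : bool :=
  [&& player_eqb (player_at st (size h0)) p, a \notin h0, b \notin h0 & s h0 == b].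

Definition dev (h : seq X) : bool :=
  has (fun k => D (take k h) && (nth a h k == a)) (iota 0 (size h).+1).

Definition s' : strategy X := fun h => if dev h then sw a b (s (map (sw a b) h)) else s h.

Lemma devP h : reflect (exists k, [/\ k <= size h, D (take k h) & nth a h k = a]) (dev h).
Proof.
apply: (iffP hasP).
- move=> [k]; rewrite mem_iota add0n ltnS => Hk /andP [HD /eqP Hn]; by exists k.
- move=> [k [Hk HD Hn]]; exists k; first by rewrite mem_iota add0n ltnS.
  by rewrite HD Hn eqxx.
Qed.

Lemma map_sw_id (h : seq X) : a \notin h -> b \notin h -> map (sw a b) h = h.
Proof.
move=> Ha Hb; apply: map_id_in => x Hx; apply: sw_id.
- by apply/eqP => E; rewrite -E Hx in Ha.
- by apply/eqP => E; rewrite -E Hx in Hb.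
Qed.

Lemma D_val h : D h -> sw a b (s (map (sw a b) h)) = a.
Proof.
case/and4P => _ Ha Hb /eqP Hs. by rewrite map_sw_id // Hs /sw eqxx; case: eqVneq.
Qed.

Lemma legal_s' : legal st p s -> legal st p s'.
Proof.
move=> Hl h Ht; rewrite /s'; case: ifP => _; last exact: Hl.
case: Ht => U S P.
have Ht' : turn_of st p (map (sw a b) h).
  by split; rewrite ?size_map // (map_inj_uniq (@sw_inj _ a b)).
have := Hl _ Ht'. by rewrite mem_map_sw.
Qed.

Lemma prefers_s' : a != b -> prefers st p s' a b.
Proof.
move=> Hab h [U S Pt] Ha Hb. rewrite /s'. case: ifP => Hd.
- case/devP: Hd => k [Hk HD Hn].
  have Ek : k = size h.
    apply/eqP; rewrite eqn_leq Hk /= leqNgt; apply/negP => Hlt.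
    by move: Ha; rewrite -Hn mem_nth.
  rewrite Ek take_size in HD. by rewrite (D_val HD) Hab.
- apply/negP => /eqP Hsb. move/negbT: Hd => /negP; apply.
  apply/devP; exists (size h); split => //; last by rewrite nth_default.
  rewrite take_size /D Pt Ha Hb Hsb eqxx /= andbT.
  exact/player_eqbP.
Qed.

Lemma devtake (play : seq X) i :
  (forall i, i < size play -> player_at st i = p -> nth a play i = s' (take i play)) ->
  i < size play -> dev (take i play) ->
  exists k, [/\ k <= i, D (take k play) & nth a play k = a].
Proof.
move=> Cs Hi Hd; case/devP: (Hd) => k [Hk HD Hn].
have Sz : size (take i play) = i by rewrite size_take Hi.
rewrite Sz in Hk. rewrite take_takel // in HD.
exists k; split => //. case: (ltnP k i) => Hki; first by rewrite -(nth_take _ Hki).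
have Eki : k = i by apply/eqP; rewrite eqn_leq Hk Hki.
subst k.
have Hp : player_at st i = p.
  by move: (HD); case/and4P => /player_eqbP; rewrite Sz.
by rewrite Cs // /s' Hd; exact: D_val HD.
Qed.

End Main.

Theorem lemma1 (X : finType) (F : sae_family X) (st p : player) (a b : X) :
  a != b -> Lprec F a b ->
  (exists s : strategy X, winning_strategy F st p s) ->
  exists s : strategy X, winning_strategy F st p s /\ prefers st p s a b.
Proof.
move=> Hab Hprec [s [Hleg Hwin]].
have Hfb : forall fi, fi \in F -> a \in fi.1 -> b \in fi.1.
  move=> fi Hfi Ha; case: (Hprec fi Hfi Ha) => gj _ [Hb Hs _]; exact: (subsetP Hs).
exists (s' st p a b s); split; last exact: prefers_s'.
split; first exact: legal_s'.
move=> play Cp Cs.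
have Cs' := proj1 (consistentP st p (s' st p a b s) play a) Cs.
case: (boolP (dev st p a b s play)) => Hd; last first.
  apply: Hwin => //. apply/(consistentP _ _ _ _ a) => i Hi Hp.
  rewrite Cs' // /s'; case: ifP => // Hdi.
  case: (devtake Cs' Hi Hdi) => k [Hk HD Hn]. exfalso; move/negP: Hd; apply.
  apply/devP; exists k; split => //; exact: leq_trans Hk (ltnW Hi).
have Hex : exists k, (k <= size play) && D st p a b s (take k play) && (nth a play k == a).
  by case/devP: Hd => k [Hk HD Hn]; exists k; rewrite Hk HD Hn eqxx.
case: (ex_minnP Hex) => k0 /andP [/andP [Hk0 HD0] /eqP Hn0] Hmin.
have Hk0s : k0 < size play.
  rewrite ltn_neqAle Hk0 andbT; apply/eqP => E.
  move: HD0; rewrite E take_size => /and4P [_ Ha _ _].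
  by rewrite (complete_mem a Cp) in Ha.
have Szk : size (take k0 play) = k0 by rewrite size_take Hk0s.
have [Hp0 Hna Hnb Hsb] : [/\ player_at st k0 = p, a \notin take k0 play,
     b \notin take k0 play & s (take k0 play) = b].
  by case/and4P: HD0 => /player_eqbP; rewrite Szk => ? ? ? /eqP.
have Uplay : uniq play by case/andP: Cp.
have Cm : complete_play (map (sw a b) play).
  by case/andP: Cp => U S; rewrite /complete_play size_map S (map_inj_uniq (@sw_inj _ a b)) U.
have Cs2 : consistent st p s (map (sw a b) play).
  apply/(consistentP _ _ _ _ a); rewrite size_map => i Hi Hp.
  rewrite (nth_map a) // -map_take.
  case: (leqP k0 i) => Hki.
  - have Hdi : dev st p a b s (take i play).
      apply/devP; exists k0; rewrite size_take Hi take_takel //; split => //.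
      case: (ltnP k0 i) => H; first by rewrite nth_take.
      by rewrite nth_default // size_take Hi.
    by rewrite Cs' // /s' Hdi swK.
  - have Hdi : ~~ dev st p a b s (take i play).
      apply/negP => Hdi; case: (devtake Cs' Hi Hdi) => k [Hk HD Hn].
      have := Hmin k; rewrite (leq_trans Hk (ltnW Hi)) HD Hn eqxx => /(_ isT) H.
      by move: (leq_trans H Hk); rewrite leqNgt Hki.
    have Hsub : forall x, x \in take i play -> x \in take k0 play.
      by move=> x; rewrite -(take_takel _ (ltnW Hki)); apply: mem_take.
    have Hni : nth a play i \in take k0 play by rewrite -(nth_take _ Hki) mem_nth // Szk.
    rewrite map_sw_id; last 2 first.
    + by apply/negP => /Hsub; rewrite (negbTE Hna).
    + by apply/negP => /Hsub; rewrite (negbTE Hnb).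
    rewrite sw_id; last 2 first.
    + by apply/eqP => E; move: Hna; rewrite -E Hni.
    + by apply/eqP => E; move: Hnb; rewrite -E Hni.
    by rewrite Cs' // /s' (negbTE Hdi).
have W := Hwin _ Cm Cs2.
move: W; rewrite /wins claims_map.
set A := [set x in claims Avoider st 0 play].
have EA' : [set x in map (sw a b) (claims Avoider st 0 play)] = [set x | sw a b x \in A].
  by apply/setP => x; rewrite !inE mem_map_sw.
rewrite EA'.
have HaP : a \in claims p st 0 play by rewrite -Hn0 claims_mem // add0n.
have Hab' : b != a by rewrite eq_sym.
destruct p.
- apply: contra => /hasP [fi Hfi Hle]; apply/hasP; exists fi => //.
  apply: (leq_trans Hle); apply: card_sw; last exact: Hfb.
  by rewrite inE HaP.
- move=> /hasP [fi Hfi Hle]; apply/hasP; exists fi => //.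
  apply: (leq_trans Hle).
  have EAA : A = [set x | sw a b x \in [set x | sw a b x \in A]].
    by apply/setP => x; rewrite !inE swK.
  rewrite [Z in _ <= #|_ :&: Z|]EAA.
  apply: card_sw; last exact: Hfb.
  have HaA : a \notin claims Avoider st 0 play.
    apply/negP => /(claims_memE a) [i Hi [Hn Hp]].
    have Ei : i = k0 by apply/eqP; rewrite -(nth_uniq a Hi Hk0s Uplay) Hn Hn0.
    by rewrite add0n Ei Hp0 in Hp.
  apply/orP; right; rewrite !inE /sw (negbTE Hab') eqxx.
  exact: HaA.
Qed.
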